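(* Let $r,n,\delta\ge 2$ be natural numbers, let $m := \max\{\binom{rn-1}{r-1}n^2, \delta\}$ and $N := \binom{m-1}{n-1}$. Let $G$ be the graph with vertices $v_{i,j,k}$ for $i\in[n]$, $j\in[N]$, $k\in[m]$, and vertices $s_{i,X}$ for $i\in[n]$ and $X\subseteq[m]$ with $|X|=n$, whose edges are: $v_{i,j,k}v_{i',j',k'}$ whenever $i\neq i'$ and $k=k'$; and $s_{i,X}v_{i,j,k}$ whenever $k\in X$ (for all $j\in[N]$). Then $\chi(G)=n$.
   Context: $[t]=\{1,\dots,t\}$. There are no other edges in $G$ than those listed. $\chi$ denotes the chromatic number. *)

(* Defs.v *)
From mathcomp Require Import all_boot.
Set Implicit Arguments. Unset Strict Implicit. Unset Printing Implicit Defensive.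

Definition colorable (V : finType) (e : rel V) (k : nat) : Prop :=
  exists f : V -> 'I_k, forall x y, e x y -> f x != f y.

Definition chromatic_number_eq (V : finType) (e : rel V) (k : nat) : Prop :=
  colorable e k /\ forall k', colorable e k' -> k <= k'.

(* Vertex set: v_{i,j,k} (i in [n], j in [N], k in [m]) and
   s_{i,X} (i in [n], X subset of [m] with |X| = n).  Indices are 0-based. *)
Definition Gvert (n N m : nat) : finType :=
  (('I_n * 'I_N * 'I_m) + ('I_n * {X : {set 'I_m} | #|X| == n}))%type.

Definition Gadj (n N m : nat) : rel (Gvert n N m) :=
  fun x y =>
  match x, y with
  | inl (i, _, k), inl (i', _, k') => (i != i') && (k == k')
  | inr (i, X), inl (i', _, k) => (i == i') && (k \in val X)
  | inl (i', _, k), inr (i, X) => (i == i') && (k \in val X)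
  | inr _, inr _ => false
  end.

Definition Gm (r n delta : nat) : nat := maxn ('C(r * n - 1, r - 1) * n ^ 2) delta.
Definition GN (r n delta : nat) : nat := 'C(Gm r n delta - 1, n - 1).

(* Main.v *)
Require Import Defs.
From mathcomp Require Import all_boot.
From mathcomp Require Import zify.

Lemma next_neq n (i : nat) : 2 <= n -> i < n -> (i.+1 %% n != i) && (i.+1 %% n < n).
Proof.
move=> hn hi; apply/andP; split; last by rewrite ltn_pmod //; lia.
case: (ltnP i.+1 n) => h.
  by rewrite modn_small // neq_ltn ltnSn orbT.
have -> : i.+1 = n by lia.
by rewrite modnn; apply/eqP; lia.
Qed.

Theorem lemma2p2 (r n delta : nat) :
  2 <= r -> 2 <= n -> 2 <= delta ->
  chromatic_number_eq (@Gadj n (GN r n delta) (Gm r n delta)) n.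
Proof.
move=> hr hn hd; split.
- pose nx (i : 'I_n) : 'I_n := Ordinal (proj2 (andP (@next_neq n i hn (ltn_ord i)))).
  exists (fun x => match x with inl (i, _, _) => i | inr (i, _) => nx i end).
  move=> [[[i j] k]|[i X]] [[[i' j'] k']|[i' X']] //=.
  + by case/andP.
  + case/andP=> /eqP e _; subst; apply/negP=> /eqP/(congr1 val)/= h.
    by move: (@next_neq n i hn (ltn_ord i)); rewrite -h eqxx.
  + case/andP=> /eqP e _; subst i'; apply/negP=> /eqP/(congr1 val)/= h.
    by move: (@next_neq n i hn (ltn_ord i)); rewrite h eqxx.
- move=> k' [f hf].
  have hm : n <= Gm r n delta.
    rewrite /Gm; apply: leq_trans (leq_maxl _ _).
    have : 0 < 'C(r * n - 1, r - 1) by rewrite bin_gt0; nia.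
    nia.
  have hN : 0 < GN r n delta by rewrite /GN bin_gt0; lia.
  have hm0 : 0 < Gm r n delta by lia.
  pose g (i : 'I_n) := f (inl (i, Ordinal hN, Ordinal hm0)).
  have gi : injective g.
    move=> i i' e; apply/eqP; apply/negPn/negP => ne.
    have := hf (inl (i, Ordinal hN, Ordinal hm0)) (inl (i', Ordinal hN, Ordinal hm0)).
    by rewrite /= ne eqxx /g => /(_ erefl); rewrite /g in e; rewrite e eqxx.
  by have := leq_card g gi; rewrite !card_ord.
Qed.
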